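(* Let $P=(Q,I,M,\Delta)$ be a broadcast protocol, $F\subseteq Q$, and $S$ the set of states returned by the saturation algorithm on $P$. If $F\cap S\neq\emptyset$, then there exists a lossy execution $\rho$ covering $F$ with at most $2|Q|$ nodes and length at most $2|Q|^2$.
   Context: A broadcast protocol is a tuple $P=(Q,I,M,\Delta)$ where $Q$ is a finite set of states, $I\subseteq Q$ initial states, $M$ a finite message alphabet and $\Delta\subseteq Q\times\{!!m,\ ??m \mid m\in M\}\times Q$ ($!!m$ = broadcast, $??m$ = reception). Protocols are complete for receptions: for every $q$, $m$ there is $q'$ with $(q,??m,q')\in\Delta$. A configuration is a finite undirected graph $\gamma=(V,E,L)$, $E$ symmetric irreflexive, $L:V\to Q$; $L(\gamma)=L(V)$; $\gamma$ is initial if $L(V)\subseteq I$. A lossy step goes from $\gamma=(V,E,L)$ to $\gamma'=(V,E,L')$ (same nodes and edges) if there exist a node $v$ and $m\in M$ with $(L(v),!!m,L'(v))\in\Delta$ and either (a) $L'(v')=L(v')$ for all $v'\neq v$ (lost broadcast), or (b) for every $v'\neq v$: if $v'$ is a neighbour of $v$ then $(L(v'),??m,L'(v'))\in\Delta$, otherwise $L'(v')=L(v')$ (successful broadcast). A lossy execution is a sequence $\gamma_0,\dots,\gamma_r$ with $\gamma_0$ initial and consecutive lossy steps; its number of nodes is $|V|$, its length is $r$, and it covers $F$ if $L(\gamma_r)\cap F\neq\emptyset$. The saturation algorithm: start with $S:=I$, $c:=|I|$; repeat: if there is $(q_1,!!m,q_2)\in\Delta$ with $q_1\in S$, $q_2\notin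 S$, add $q_2$ to $S$ and $c:=c+1$; else if there are $(q_1,!!m,q_2),(q_1',??m,q_2')\in\Delta$ with $q_1,q_2,q_1'\in S$, $q_2'\notin S$, add $q_2'$ and $c:=c+2$; else stop and return $S$. *)

(* Defs.v *)
From mathcomp Require Import all_boot.
Set Implicit Arguments. Unset Strict Implicit. Unset Printing Implicit Defensive.

Inductive act (M : Type) := Bcast of M | Recv of M.
Arguments Bcast {M}. Arguments Recv {M}.

(* A broadcast protocol P = (Q, I, M, Delta) is given by finite types Q, M,
   a set I : {set Q} and a transition relation Delta : Q -> act M -> Q -> bool
   ((q, a, q') \in Delta  iff  Delta q a q'). *)

Definition complete_for_receptions (Q M : Type) (Delta : Q -> act M -> Q -> bool) :=
  forall (q : Q) (m : M), exists q' : Q, Delta q (Recv m) q'.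

(* Configurations: the node set is 'I_n, the edge relation E (symmetric,
   irreflexive) is fixed along an execution, and only the labelling changes. *)
Definition simple_graph n (E : rel 'I_n) :=
  (forall u v, E u v = E v u) /\ (forall u, E u u = false).

Definition lossy_step (Q M : Type) (Delta : Q -> act M -> Q -> bool) n
    (E : rel 'I_n) (L L' : 'I_n -> Q) : Prop :=
  exists (v : 'I_n) (m : M),
    Delta (L v) (Bcast m) (L' v) /\
    ((forall v', v' != v -> L' v' = L v') \/
     (forall v', v' != v ->
        (E v v' -> Delta (L v') (Recv m) (L' v')) /\ (~~ E v v' -> L' v' = L v'))).

Definition lossy_execution (Q M : Type) (I : {pred Q})
    (Delta : Q -> act M -> Q -> bool) n (E : rel 'I_n)
    (rho : nat -> 'I_n -> Q) (r : nat) : Prop :=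
  simple_graph E /\
  (forall v, rho 0 v \in I) /\
  (forall i, i < r -> lossy_step Delta E (rho i) (rho i.+1)).

Definition covers (Q : Type) n (L : 'I_n -> Q) (F : {pred Q}) :=
  exists v : 'I_n, L v \in F.

(* One iteration of the saturation algorithm (counter c omitted, it does not
   influence the returned set). *)
Definition sat_step (Q M : finType) (Delta : Q -> act M -> Q -> bool)
    (S : {set Q}) : {set Q} :=
  match [pick q2 | (q2 \notin S) &&
           [exists q1, exists m, (q1 \in S) && Delta q1 (Bcast m) q2]] with
  | Some q2 => q2 |: S
  | None =>
    match [pick q2' | (q2' \notin S) &&
             [exists q1, exists q2, exists q1', exists m,
                [&& q1 \in S, q2 \in S, q1' \in S,
                    Delta q1 (Bcast m) q2 & Delta q1' (Recv m) q2']]] with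
    | Some q2' => q2' |: S
    | None => S
    end
  end.

(* Each non-final iteration adds a new state, so the algorithm stops after at
   most #|Q| iterations; iterating further leaves S unchanged. *)
Definition saturation (Q M : finType) (I : {set Q})
    (Delta : Q -> act M -> Q -> bool) : {set Q} :=
  iter #|Q| (sat_step Delta) I.

(* Main.v *)
Require Import Defs.
From mathcomp Require Import all_boot.
Set Implicit Arguments. Unset Strict Implicit. Unset Printing Implicit Defensive.

Section Gen.
Variables (Q M : Type) (Delta : Q -> act M -> Q -> bool) (V : finType) (E : rel V).

Definition vstep (L L' : V -> Q) := exists (v : V) (m : M),
  Delta (L v) (Bcast m) (L' v) /\
  ((forall v', v' != v -> L' v' = L v') \/
   (forall v', v' != v ->
      (E v v' -> Delta (L v') (Recv m) (L' v')) /\ (~~ E v v' -> L' v' = L v'))).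

Inductive reach (L : V -> Q) : (V -> Q) -> nat -> Prop :=
| reach0 : reach L L 0
| reachS L1 L2 k : reach L L1 k -> vstep L1 L2 -> reach L L2 k.+1.

Lemma reach_rho L L' k : reach L L' k -> exists rho : nat -> V -> Q,
  [/\ rho 0 = L, rho k = L' & forall i, i < k -> vstep (rho i) (rho i.+1)].
Proof.
elim => [|L1 L2 k' _ [rho [H0 Hk Hs]] Hst].
  by exists (fun _ => L); split.
exists (fun i => if i <= k' then rho i else L2); split => //.
- by rewrite ltnn.
move=> i Hi; rewrite ltnS in Hi.
case: (ltngtP i k') Hi => // [Hlt|->] _.
  by apply: Hs.
by rewrite Hk.
Qed.

Lemma reach_trans L L1 L2 a b : reach L L1 a -> reach L1 L2 b -> reach L L2 (a + b).
Proof.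
move=> H1; elim => [|L3 L4 k _ IH Hst]; first by rewrite addn0.
by rewrite addnS; apply: reachS IH Hst.
Qed.

Lemma reach_moves (zs : seq V) (s : Q) (m : M) (L : V -> Q) : uniq zs ->
  (forall z, z \in zs -> Delta (L z) (Bcast m) s) ->
  reach L (fun z => if z \in zs then s else L z) (size zs).
Proof.
elim: zs => [|z zs IH] /=.
  by move=> _ _; apply: reach0.
move=> /andP [zn U] H.
have H' : forall z', z' \in zs -> Delta (L z') (Bcast m) s.
  by move=> z' Hz; apply: H; rewrite inE Hz orbT.
apply: reachS (IH U H') _.
exists z, m; split.
  by rewrite inE eqxx /= (negbTE zn); apply: H; rewrite inE eqxx.
left => v' Hv'; rewrite inE (negbTE Hv') /=; done.
Qed.

End Gen.

Section Sat.
Variables (Q M : finType) (I : {set Q}) (Delta : Q -> act M -> Q -> bool).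

Definition T j := iter j (sat_step Delta) I.
Definition SS := T #|Q|.

Definition cond1 (X : {set Q}) x :=
  [exists p : Q * M, (p.1 \in X) && Delta p.1 (Bcast p.2) x].
Definition cond2 (X : {set Q}) x :=
  [exists p : Q * Q * Q * M, [&& p.1.1.1 \in X, p.1.1.2 \in X, p.1.2 \in X,
      Delta p.1.1.1 (Bcast p.2) p.1.1.2 & Delta p.1.2 (Recv p.2) x]].

Lemma sat_sub (X : {set Q}) : X \subset sat_step Delta X.
Proof.
rewrite /sat_step; case: pickP => [q _|_]; first exact: subsetUr.
case: pickP => [q _|_] //; exact: subsetUr.
Qed.

Lemma T_mono i j : i <= j -> T i \subset T j.
Proof.
move=> /subnKC <-; elim: (j - i) => [|d IH]; first by rewrite addn0.
by rewrite addnS; apply: subset_trans IH (sat_sub _).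
Qed.

Lemma sat_new (X : {set Q}) x : x \in sat_step Delta X -> x \notin X ->
  sat_step Delta X = x |: X /\ (cond1 X x \/ cond2 X x).
Proof.
rewrite /sat_step; case: pickP => [q Hq|_].
  move=> Hin Hn; case/setU1P: Hin => [E|H]; last by rewrite H in Hn.
  subst q; split => //; left.
  move: Hq => /andP [_ /existsP [q1 /existsP [m /andP [H1 H2]]]].
  by apply/existsP; exists (q1, m); rewrite /= H1.
case: pickP => [q Hq|_]; last by move=> ->.
move=> Hin Hn; case/setU1P: Hin => [E|H]; last by rewrite H in Hn.
subst q; split => //; right.
move: Hq => /andP [_ /existsP [q1 /existsP [q2 /existsP [q1' /existsP [m H]]]]].
by apply/existsP; exists (q1, q2, q1', m).
Qed.

Definition lvl x := find (fun j => x \in T j) (iota 0 #|Q|.+1).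

Lemma lvl_le x : x \in SS -> lvl x <= #|Q|.
Proof.
move=> H; rewrite -ltnS -[X in _ < X](size_iota 0) -has_find.
apply/hasP; exists #|Q|; [by rewrite mem_iota add0n ltnS leqnn | exact H].
Qed.

Lemma lvl_in x : x \in SS -> x \in T (lvl x).
Proof.
move=> H.
have Hh : has (fun j => x \in T j) (iota 0 #|Q|.+1).
  by apply/hasP; exists #|Q|; [by rewrite mem_iota add0n ltnS leqnn | exact H].
have := nth_find 0 Hh; rewrite nth_iota ?add0n //.
by rewrite ltnS lvl_le.
Qed.

Lemma lvl_min x j : x \in T j -> lvl x <= j.
Proof.
move=> H; rewrite leqNgt; apply/negP => Hlt.
have Hs : lvl x <= #|Q|.+1 by rewrite -[X in _ <= X](size_iota 0); apply: find_size.
have := @before_find _ 0 (fun j => x \in T j) (iota 0 #|Q|.+1) j Hlt.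
by rewrite nth_iota ?add0n ?H //; apply: leq_trans Hlt Hs.
Qed.

Lemma T_S j : j <= #|Q| -> T j \subset SS.
Proof. exact: T_mono. Qed.

Lemma lvl_T x j : x \in SS -> lvl x <= j -> x \in T j.
Proof. by move=> H Hj; apply: (subsetP (T_mono Hj)); apply: lvl_in. Qed.

Lemma lvl_uniq x y j : x \in SS -> y \in SS -> lvl x = j.+1 -> lvl y = j.+1 -> x = y.
Proof.
move=> Hx Hy Lx Ly.
have Hx1 : x \in T j.+1 by rewrite -Lx; apply: lvl_in.
have Hy1 : y \in T j.+1 by rewrite -Ly; apply: lvl_in.
have Nx : x \notin T j by apply/negP => /lvl_min; rewrite Lx ltnn.
have Ny : y \notin T j by apply/negP => /lvl_min; rewrite Ly ltnn.
have [E _] := sat_new Hx1 Nx.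
have : y \in x |: T j by rewrite -E.
by case/setU1P => // H; rewrite H in Ny.
Qed.

Lemma new_cond x : x \in SS -> lvl x != 0 ->
  cond1 (T (lvl x).-1) x \/ cond2 (T (lvl x).-1) x.
Proof.
move=> H; case E: (lvl x) => [|j] // _ /=.
have Hx1 : x \in T j.+1 by rewrite -E; apply: lvl_in.
have Nx : x \notin T j by apply/negP => /lvl_min; rewrite E ltnn.
by have [_ ?] := sat_new Hx1 Nx.
Qed.

Definition binfo x : option (Q * M) :=
  if (x \in SS) && (lvl x != 0) then
    [pick p : Q * M | (p.1 \in T (lvl x).-1) && Delta p.1 (Bcast p.2) x]
  else None.

Definition rinfo x : option (Q * Q * Q * M) :=
  if [&& x \in SS, lvl x != 0 & binfo x == None] then
    [pick p : Q * Q * Q * M | [&& p.1.1.1 \in T (lvl x).-1, p.1.1.2 \in T (lvl x).-1,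
      p.1.2 \in T (lvl x).-1,
      Delta p.1.1.1 (Bcast p.2) p.1.1.2 & Delta p.1.2 (Recv p.2) x]]
  else None.

Definition par x := match binfo x with Some p => p.1 | None =>
  match rinfo x with Some p => p.1.2 | None => x end end.

Lemma binfoP x p : binfo x = Some p ->
  [/\ x \in SS, 0 < lvl x, p.1 \in T (lvl x).-1 & Delta p.1 (Bcast p.2) x].
Proof.
rewrite /binfo; case: ifP => // /andP [H1 H2]; case: pickP => // q /andP [H3 H4] [<-].
by rewrite lt0n.
Qed.

Lemma rinfoP x p : rinfo x = Some p ->
  [/\ x \in SS, 0 < lvl x, binfo x = None,
      [/\ p.1.1.1 \in T (lvl x).-1, p.1.1.2 \in T (lvl x).-1 & p.1.2 \in T (lvl x).-1] &
      Delta p.1.1.1 (Bcast p.2) p.1.1.2 /\ Delta p.1.2 (Recv p.2) x].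
Proof.
rewrite /rinfo; case: ifP => // /and3P [H1 H2 /eqP H3]; case: pickP => // q.
by move=> /and5P [? ? ? ? ?] [<-]; rewrite -lt0n in H2; split.
Qed.

Lemma before_lvl x y : x \in SS -> 0 < lvl x -> y \in T (lvl x).-1 ->
  y \in SS /\ lvl y < lvl x.
Proof.
move=> Hx Hl Hy; split.
  apply: (subsetP (T_S _)) Hy; apply: leq_trans (leq_pred _) (lvl_le Hx).
by have := lvl_min Hy; case: (lvl x) Hl.
Qed.

Lemma par_spec x : x \in SS -> 0 < lvl x -> par x \in SS /\ lvl (par x) < lvl x.
Proof.
move=> Hx Hl; rewrite /par; case Eb: (binfo x) => [p|].
  by have [_ _ H _] := binfoP Eb; apply: before_lvl.
case Er: (rinfo x) => [p|].
  by have [_ _ _ [_ _ H] _] := rinfoP Er; apply: before_lvl.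
exfalso; have := new_cond Hx; rewrite -lt0n => /(_ Hl) [] /existsP [p Hp].
  by move: Eb; rewrite /binfo Hx -lt0n Hl /=; case: pickP => // /(_ p); rewrite Hp.
move: Er; rewrite /rinfo Hx -lt0n Hl Eb /=; case: pickP => // /(_ p).
by move: Hp; rewrite /= => ->.
Qed.

Fixpoint ancf (j k : nat) (t : Q) : Q :=
  match k with 0 => t | k'.+1 => if lvl t <= j then t else ancf j k' (par t) end.

Definition anc t j := ancf j #|Q| t.

Lemma ancf_id j k t : lvl t <= j -> ancf j k t = t.
Proof. by case: k => //= k ->. Qed.

Lemma ancf_lvl j k t : t \in SS -> lvl t <= k -> ancf j k t \in SS /\ lvl (ancf j k t) <= j.
Proof.
elim: k t => [|k IH] t Ht Hk /=.
  by move: Hk; rewrite leqn0 => /eqP ->.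
case: ifP => // Hj.
have Hl : 0 < lvl t by case: (lvl t) Hj.
have [Hp Hpl] := par_spec Ht Hl.
by apply: IH => //; rewrite -ltnS; apply: leq_trans Hpl Hk.
Qed.

Lemma ancf_step j k t : t \in SS -> lvl t <= k ->
  (lvl (ancf j.+1 k t) <= j -> ancf j k t = ancf j.+1 k t) /\
  (lvl (ancf j.+1 k t) = j.+1 -> ancf j k t = par (ancf j.+1 k t)).
Proof.
elim: k t => [|k IH] t Ht Hk /=.
  by move: Hk; rewrite leqn0 => /eqP ->.
case: (ltngtP (lvl t) j.+1) => Hj.
- by rewrite ltnS in Hj; rewrite Hj; split => // E; move: Hj; rewrite E ltnn.
- have Hl : 0 < lvl t by apply: leq_trans Hj.
  have Hj' : (lvl t <= j) = false by apply/negbTE; rewrite -ltnNge; apply: ltnW.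
  have Hj1 : (lvl t <= j.+1) = false by rewrite leqNgt Hj.
  rewrite Hj'.
  have [Hp Hpl] := par_spec Ht Hl.
  by apply: IH => //; rewrite -ltnS; apply: leq_trans Hpl Hk.
- have Hj' : (lvl t <= j) = false by rewrite Hj ltnn.
  rewrite Hj'; split => // _.
  have Hl : 0 < lvl t by rewrite Hj.
  have [Hp Hpl] := par_spec Ht Hl.
  by apply: ancf_id; rewrite -ltnS -Hj.
Qed.

Lemma info_some x : x \in SS -> 0 < lvl x -> binfo x = None -> rinfo x <> None.
Proof.
move=> Hx Hl Eb Er.
have := new_cond Hx; rewrite -lt0n => /(_ Hl) [] /existsP [p Hp].
  by move: Eb; rewrite /binfo Hx -lt0n Hl /=; case: pickP => // /(_ p); rewrite Hp.
move: Er; rewrite /rinfo Hx -lt0n Hl Eb /=; case: pickP => // /(_ p).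
by move: Hp; rewrite /= => ->.
Qed.

Lemma anc_S t j : t \in SS -> anc t j \in SS /\ lvl (anc t j) <= j.
Proof. by move=> Ht; apply: ancf_lvl => //; apply: lvl_le. Qed.

Lemma anc_id t j : lvl t <= j -> anc t j = t.
Proof. exact: ancf_id. Qed.

Lemma anc_step t j : t \in SS ->
  (lvl (anc t j.+1) <= j -> anc t j = anc t j.+1) /\
  (lvl (anc t j.+1) = j.+1 -> anc t j = par (anc t j.+1)).
Proof. by move=> Ht; apply: ancf_step => //; apply: lvl_le. Qed.

Lemma anc_K t j s : t \in SS -> s \in SS -> lvl s = j.+1 ->
  (anc t j.+1 != s -> anc t j = anc t j.+1) /\
  (anc t j.+1 = s -> anc t j = par s).
Proof.
move=> Ht Hs Hls; have [H1 H2] := anc_step j Ht.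
have [HaS Hal] := anc_S j.+1 Ht.
split.
  move=> Hne; apply: H1; rewrite leq_eqVlt in Hal; case/orP: Hal => // /eqP E.
  by move: Hne; rewrite (lvl_uniq HaS Hs E Hls) eqxx.
move=> E; rewrite -E; apply: H2; by rewrite E.
Qed.

Variable i0 : Q.
Hypothesis Hi0 : i0 \in I.
Hypothesis complete : complete_for_receptions Delta.

Definition V := (Q * bool)%type.

Definition tgt (z : V) : Q :=
  if z.2 then (if rinfo z.1 is Some p then p.1.1.1 else i0)
  else (if z.1 \in SS then z.1 else i0).

Definition live (z : V) j : bool :=
  if z.2 then (rinfo z.1 == None) || (j < lvl z.1) else true.

Definition adj (u z : V) : bool :=
  [&& u.2, rinfo u.1 != None & anc (tgt z) (lvl u.1) == u.1].

Definition EE : rel V := fun u v => adj u v || adj v u.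

Definition Inv j (L : V -> Q) := forall z, live z j -> L z = anc (tgt z) j.

Definition pickrecv q m := odflt q [pick q' | Delta q (Recv m) q'].

Lemma pickrecvP q m : Delta q (Recv m) (pickrecv q m).
Proof.
rewrite /pickrecv; case: pickP => //= H.
by have [q' Hq'] := complete q m; move: (H q'); rewrite Hq'.
Qed.

Lemma I_SS : I \subset SS.
Proof. exact: (T_S (leq0n _)). Qed.

Lemma tgt_S z : tgt z \in SS.
Proof.
rewrite /tgt; case: z.2.
  case Er: (rinfo z.1) => [p|]; last exact: (subsetP I_SS).
  by have [Hs Hl _ [H _ _] _] := rinfoP Er; have [] := before_lvl Hs Hl H.
by case: ifP => // _; exact: (subsetP I_SS).
Qed.

Lemma live_mono z j : live z j.+1 -> live z j.
Proof. rewrite /live; case: z.2 => //; case/orP => [->//|H]; by rewrite ltnW ?orbT. Qed.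

Lemma EE_irr z : EE z z = false.
Proof.
rewrite /EE orbb /adj; apply/negbTE; apply/and3P => [[H2 Hr /eqP Ha]].
move: Ha; rewrite /tgt H2; case Er: (rinfo z.1) Hr => [p|] // _.
have [Hs Hl _ [H _ _] _] := rinfoP Er; have [_ Hlt] := before_lvl Hs Hl H.
rewrite anc_id; last exact: ltnW.
by move=> E; move: Hlt; rewrite E ltnn.
Qed.

Lemma slot j L : Inv j L -> exists L' k,
  [/\ reach Delta EE L L' k, k <= #|{: V}| & Inv j.+1 L'].
Proof.
move=> HI.
case: (pickP (fun s => (s \in SS) && (lvl s == j.+1))) => [s /andP [Hs /eqP Hls]|Hnone].
  have K := fun t => @anc_K t j s .
  case Eb: (binfo s) => [[q1 m]|].
    have [_ _ Hq1 HD] := binfoP Eb.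
    have Hpar : par s = q1 by rewrite /par Eb.
    pose A := [set z | live z j && (anc (tgt z) j.+1 == s)].
    exists (fun z => if z \in enum A then s else L z), (size (enum A)); split.
    - apply: reach_moves; first exact: enum_uniq.
      move=> z; rewrite mem_enum inE => /andP [Hl /eqP Ha].
      rewrite HI // (proj2 (K _ (tgt_S z) Hs Hls) Ha) Hpar; exact: HD.
    - by rewrite -cardE max_card.
    move=> z Hl; have Hl' := live_mono Hl.
    rewrite mem_enum inE Hl' /=; case: eqP => [->//|/eqP Hne].
    by rewrite HI // (proj1 (K _ (tgt_S z) Hs Hls) Hne).
  case Er: (rinfo s) => [[[[q1 q2] q1'] m]|]; last first.
    by exfalso; apply: (info_some Hs _ Eb Er); rewrite Hls.
  have [_ _ _ [Hq1 Hq2 Hq1'] [HB HR]] := rinfoP Er; rewrite Hls /= in Hq1 Hq2 Hq1'.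
  have Hpar : par s = q1' by rewrite /par Eb Er.
  pose v : V := (s, true).
  have Hvt : tgt v = q1 by rewrite /tgt /= Er.
  pose L' := fun z => if z == v then q2 else if EE v z then
      (if live z j && (anc (tgt z) j.+1 == s) then s else pickrecv (L z) m) else L z.
  have Hcard : 0 < #|{: V}| by apply/card_gt0P; exists v.
  exists L', 1; split; [|exact: Hcard|].
    apply: reachS (reach0 _ _ _) _.
    exists v, m; split.
      rewrite /L' eqxx HI; last by rewrite /live /= Er Hls ltnSn orbT.
      by rewrite Hvt anc_id //; apply: lvl_min.
    right => v' Hv'; rewrite /L' (negbTE Hv'); split.
      move=> ->; case: ifP; last by move=> _; apply: pickrecvP.
      move=> /andP [Hl /eqP Ha]; rewrite HI // (proj2 (K _ (tgt_S v') Hs Hls) Ha) Hpar.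
      exact: HR.
    by move=> /negbTE ->.
  move=> z Hl; have Hl' := live_mono Hl; rewrite /L'.
  case: eqP => [Ez|/eqP Hne].
    by move: Hl; rewrite Ez /live /= Er Hls ltnn.
  case HE: (EE v z).
    suff Ha : anc (tgt z) j.+1 == s by rewrite Hl' Ha (eqP Ha).
    move: HE; rewrite /EE; case/orP.
      by rewrite /adj /= Er Hls => /eqP ->.
    rewrite /adj => /and3P [Hz2 Hzr /eqP Ha].
    move: Hl; rewrite /live Hz2 (negbTE Hzr) /= => Hlt.
    move: Ha; rewrite Hvt anc_id; last first.
      by apply: leq_trans (lvl_min Hq1) (ltnW (ltnW Hlt)).
    move=> E; have := lvl_min Hq1; rewrite E => H.
    by have := leq_ltn_trans H (ltnW Hlt); rewrite ltnn.
  rewrite HI //; apply: (proj1 (K _ (tgt_S z) Hs Hls)).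
  apply/negP => /eqP Ha; move: HE; rewrite /EE /adj /= Er Hls Ha eqxx.
  done.
exists L, 0; split; [exact: reach0 | exact: leq0n |].
move=> z Hl; rewrite HI; last exact: live_mono.
have [HaS Hal] := anc_S j.+1 (tgt_S z).
apply: (proj1 (anc_step j (tgt_S z))).
rewrite leq_eqVlt in Hal; case/orP: Hal => // /eqP E.
by move: (Hnone (anc (tgt z) j.+1)); rewrite HaS E eqxx.
Qed.

Definition L0 (z : V) := anc (tgt z) 0.

Lemma run j : exists L k, [/\ reach Delta EE L0 L k, k <= j * #|{: V}| & Inv j L].
Proof.
elim: j => [|j [L [k [HR Hk HI]]]].
  by exists L0, 0; split; [exact: reach0 | exact: leq0n | ].
have [L' [k' [HR' Hk' HI']]] := slot HI.
exists L', (k + k'); split; [exact: reach_trans HR HR' | | exact: HI'].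
by rewrite mulSn addnC leq_add.
Qed.

End Sat.

Theorem theorem3p5 (Q M : finType) (I : {set Q})
    (Delta : Q -> act M -> Q -> bool) (F : {set Q}) :
  complete_for_receptions Delta ->
  F :&: saturation I Delta != set0 ->
  exists (n : nat) (E : rel 'I_n) (rho : nat -> 'I_n -> Q) (r : nat),
    [/\ lossy_execution (mem I) Delta E rho r,
        covers (rho r) (mem F),
        n <= 2 * #|Q| &
        r <= 2 * #|Q| ^ 2].
Proof.
move=> Hc /set0Pn [f /setIP [Hf HfS]].
have HfS' : f \in SS I Delta by [].
have [Hi0S Hi0l] := anc_S (I:=I) (Delta:=Delta) 0 HfS'.
have Hi0 : anc I Delta f 0 \in I.
  by have := lvl_T Hi0S Hi0l.
set i0 := anc I Delta f 0 in Hi0.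
have [L [k [HR Hk HI]]] := run Hi0 Hc #|Q|.
have [rho [H0 Hk' Hs]] := reach_rho HR.
pose W := V Q.
exists #|{: W}|, (fun a b => EE I Delta i0 (enum_val a) (enum_val b)),
  (fun i a => rho i (enum_val a)), k.
have cardW : #|{: W}| = 2 * #|Q| by rewrite card_prod card_bool mulnC.
split.
- split; [split|split].
  + by move=> u v; rewrite /EE orbC.
  + by move=> u; apply: EE_irr.
  + move=> a; rewrite H0 /L0.
    have [HaS Hal] := anc_S (I:=I) (Delta:=Delta) 0 (tgt_S Delta Hi0 (enum_val a)).
    by have := lvl_T HaS Hal.
  + move=> i Hi; have [v [m [HB HD]]] := Hs i Hi.
    exists (enum_rank v), m; rewrite !enum_rankK; split => //.
    have Hne : forall a, a != enum_rank v -> enum_val a != v.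
      move=> a Ha; apply/negP => /eqP E; move: Ha; by rewrite -E enum_valK eqxx.
    case: HD => [HD|HD]; [left|right] => a Ha; exact: HD (Hne a Ha).
- exists (enum_rank ((f, false) : W)); rewrite enum_rankK Hk' HI //.
  by rewrite /tgt /= HfS' anc_id // lvl_le.
- by rewrite cardW.
- by move: Hk; rewrite cardW mulnCA mulnn.
Qed.
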